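(* Let $0<r_1<r_2<r_3$ and let $f:\mathbb T^2\to\mathbb R$, $f(\alpha,\beta)=C(r_1,r_2,r_3,\alpha,\beta)$. Then $(\alpha,\beta)=(\pi,0)$ is a global minimum point of $f$ (i.e. $c(r_1,r_2,r_3)=f(\pi,0)=\frac1{r_1+r_2}+\frac1{r_2+r_3}+\frac1{r_3-r_1}$) if and only if \[ r_2(r_3-r_1)^3 - r_1(r_3+r_2)^3 - r_3(r_1+r_2)^3 \ \ge\ 0. \] Moreover, if this inequality holds, $(\pi,0)$ is the unique global minimum point of $f$ on $\mathbb T^2$.
   Context: For $r_1,r_2,r_3\ge 0$ and $(\alpha,\beta)\in\mathbb T^2=(\mathbb R/2\pi\mathbb Z)^2$ let \[C(r_1,r_2,r_3,\alpha,\beta)=\frac{1}{\sqrt{r_1^2+r_2^2-2r_1r_2\cos\alpha}}+\frac{1}{\sqrt{r_1^2+r_3^2-2r_1r_3\cos\beta}}+\frac{1}{\sqrt{r_2^2+r_3^2-2r_2r_3\cos(\alpha-\beta)}}\] (value $+\infty$ if a denominator vanishes); this is the Coulomb cost of $v_1=(r_1,0)$, $v_2=r_2(\cos\alpha,\sin\alpha)$, $v_3=r_3(\cos\beta,\sin\beta)$ in $\mathbb R^2$. The radial cost is $c(r_1,r_2,r_3)=\min_{(\alpha,\beta)\in\mathbb T^2}C(r_1,r_2,r_3,\alpha,\beta)$. *)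

(* Defs.v *)
From Stdlib Require Import Reals ZArith.
Open Scope R_scope.

(* Coulomb cost of v1 = (r1,0), v2 = r2 (cos a, sin a), v3 = r3 (cos b, sin b).
   Angles are real representatives of points of the torus (R/2piZ)^2; the
   function is 2pi-periodic in each angle.  Real-valued: under the standing
   hypothesis 0 < r1 < r2 < r3 of the theorem no denominator vanishes. *)
Definition Ccost (r1 r2 r3 a b : R) : R :=
  / sqrt (r1 ^ 2 + r2 ^ 2 - 2 * r1 * r2 * cos a)
  + / sqrt (r1 ^ 2 + r3 ^ 2 - 2 * r1 * r3 * cos b)
  + / sqrt (r2 ^ 2 + r3 ^ 2 - 2 * r2 * r3 * cos (a - b)).

Definition angle_eq (x y : R) : Prop := exists k : Z, x = y + 2 * PI * IZR k.

(* Main.v *)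
Require Import Defs.
From Stdlib Require Import Reals ZArith Lra Psatz.
From Coquelicot Require Import Coquelicot.
Open Scope R_scope.

Lemma tangent (D y : R) : 0 < D -> 0 < y ->
  0 <= / sqrt D - / y - (y^2 - D)/(2*y^3) /\
  (/ sqrt D - / y - (y^2 - D)/(2*y^3) = 0 -> D = y^2).
Proof.
  intros HD Hy.
  assert (Hx : 0 < sqrt D) by (apply sqrt_lt_R0; lra).
  assert (HxD : sqrt D * sqrt D = D) by (apply sqrt_sqrt; lra).
  set (x := sqrt D) in *.
  assert (E : / x - / y - (y^2 - D)/(2*y^3) = (x-y)^2*(x+2*y)/(2*x*y^3)).
  { rewrite <- HxD. field. repeat split; apply Rgt_not_eq; lra. }
  rewrite E. split.
  - apply Rmult_le_pos. apply Rmult_le_pos. apply pow2_ge_0. lra.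
    left; apply Rinv_0_lt_compat. apply Rmult_lt_0_compat. lra. apply pow_lt; lra.
  - intro H0. assert (Hn : (x-y)^2*(x+2*y) = 0).
    { assert (Hd : 2*x*y^3 <> 0) by (apply Rgt_not_eq; apply Rmult_lt_0_compat; [lra|apply pow_lt; lra]).
      unfold Rdiv in H0. apply Rmult_integral in H0. destruct H0 as [H0|H0]; auto.
      exfalso; apply (Rinv_neq_0_compat _ Hd); auto. }
    apply Rmult_integral in Hn. destruct Hn as [Hn|Hn]; [|lra].
    assert (x = y) by nra. rewrite <- HxD. subst x. rewrite H. ring.
Qed.

Lemma chord (P Q M a b : R) : 0 < P -> 0 < Q -> 0 < M -> M*(P+Q) <= P*Q ->
  0 <= P*(1+cos a) + Q*(1+cos (a-b)) - M*(1-cos b).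
Proof.
  intros HP HQ HM HPQ.
  set (al := a/2). set (ga := (a-b)/2).
  replace a with (2*al) by (unfold al; field).
  replace (2*al - b) with (2*ga) by (unfold ga, al; field).
  replace b with (2*(al-ga)) by (unfold al, ga; field).
  rewrite (cos_2a_cos al), (cos_2a_cos ga), (cos_2a_sin (al-ga)), sin_minus.
  pose proof (sin2_cos2 al) as S1. pose proof (sin2_cos2 ga) as S2. unfold Rsqr in *.
  set (sa := sin al) in *. set (ca := cos al) in *. set (sg := sin ga) in *. set (cg := cos ga) in *.
  assert (B1 : (sa*cg - ca*sg)^2 <= (Rabs cg + Rabs ca)^2).
  { assert (Rabs (sa*cg - ca*sg) <= Rabs cg + Rabs ca).
    { eapply Rle_trans. apply Rabs_triang_inv2 || apply Rabs_triang.
      rewrite Rabs_Ropp, !Rabs_mult.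
      assert (Rabs sa <= 1). { apply Rabs_le. nra. }
      assert (Rabs sg <= 1). { apply Rabs_le. nra. }
      pose proof (Rabs_pos cg). pose proof (Rabs_pos ca). nra. }
    rewrite <- (pow2_abs (sa*cg - ca*sg)).
    pose proof (Rabs_pos (sa*cg - ca*sg)). nra. }
  assert (B2 : M*(Rabs cg + Rabs ca)^2 <= P*ca^2 + Q*cg^2).
  { rewrite <- (pow2_abs ca), <- (pow2_abs cg).
    pose proof (Rabs_pos cg). pose proof (Rabs_pos ca).
    set (p := Rabs ca) in *. set (q := Rabs cg) in *.
    assert (M*(q+p)^2*(P+Q) <= (P*p^2+Q*q^2)*(P+Q)).
    { assert (M*(q+p)^2*(P+Q) <= P*Q*(q+p)^2).
      { replace (M*(q+p)^2*(P+Q)) with ((M*(P+Q))*(q+p)^2) by ring. apply Rmult_le_compat_r. apply pow2_ge_0. exact HPQ. }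
      assert (E: (P*p^2+Q*q^2)*(P+Q) - P*Q*(q+p)^2 = (P*p-Q*q)^2) by ring.
      pose proof (pow2_ge_0 (P*p-Q*q)). lra. }
    apply Rmult_le_reg_r with (P+Q). lra. lra. }
  nra.
Qed.

Lemma f0_val (r1 r2 r3 : R) : 0 < r1 -> r1 < r2 -> r2 < r3 ->
  Ccost r1 r2 r3 PI 0 = / (r1 + r2) + / (r2 + r3) + / (r3 - r1).
Proof.
  intros. unfold Ccost. rewrite Rminus_0_r, cos_PI, cos_0.
  replace (r1 ^ 2 + r2 ^ 2 - 2 * r1 * r2 * -1) with ((r1+r2)^2) by ring.
  replace (r1 ^ 2 + r3 ^ 2 - 2 * r1 * r3 * 1) with ((r3-r1)^2) by ring.
  replace (r2 ^ 2 + r3 ^ 2 - 2 * r2 * r3 * -1) with ((r2+r3)^2) by ring.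
  rewrite !sqrt_pow2 by lra. ring.
Qed.

Definition poly3 (r1 r2 r3 : R) := r2 * (r3 - r1) ^ 3 - r1 * (r3 + r2) ^ 3 - r3 * (r1 + r2) ^ 3.

Lemma PQM_id (r1 r2 r3 : R) : 0 < r1 -> r1 < r2 -> r2 < r3 ->
  let P := r1*r2/(r1+r2)^3 in let Q := r2*r3/(r2+r3)^3 in let M := r1*r3/(r3-r1)^3 in
  M*(P+Q) - P*Q = - poly3 r1 r2 r3 * (r1*r2*r3) / ((r1+r2)^3*(r2+r3)^3*(r3-r1)^3).
Proof.
  intros. unfold P, Q, M, poly3. field. repeat split; try apply pow_nonzero; lra.
Qed.

Lemma suff (r1 r2 r3 : R) : 0 < r1 -> r1 < r2 -> r2 < r3 -> 0 <= poly3 r1 r2 r3 ->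
  forall a b, Ccost r1 r2 r3 PI 0 <= Ccost r1 r2 r3 a b /\
   (Ccost r1 r2 r3 a b <= Ccost r1 r2 r3 PI 0 -> cos a = -1 /\ cos b = 1).
Proof.
  intros h1 h12 h23 Hp a b.
  rewrite f0_val by assumption.
  pose proof (PQM_id r1 r2 r3 h1 h12 h23) as Hid. cbv zeta in Hid.
  set (P := r1*r2/(r1+r2)^3) in *. set (Q := r2*r3/(r2+r3)^3) in *. set (M := r1*r3/(r3-r1)^3) in *.
  assert (HP : 0 < P) by (unfold P; apply Rdiv_lt_0_compat; [nra| apply pow_lt; lra]).
  assert (HQ : 0 < Q) by (unfold Q; apply Rdiv_lt_0_compat; [nra| apply pow_lt; lra]).
  assert (HM : 0 < M) by (unfold M; apply Rdiv_lt_0_compat; [nra| apply pow_lt; lra]).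
  assert (HPQ : M*(P+Q) <= P*Q).
  { assert (0 <= poly3 r1 r2 r3 * (r1*r2*r3) / ((r1+r2)^3*(r2+r3)^3*(r3-r1)^3)).
    { apply Rmult_le_pos. apply Rmult_le_pos. lra.
      assert (0 < r1*r2*r3) by (repeat apply Rmult_lt_0_compat; lra). lra.
      left. apply Rinv_0_lt_compat. apply Rmult_lt_0_compat; [apply Rmult_lt_0_compat|]; apply pow_lt; lra. }
    unfold Rdiv in Hid, H. lra. }
  pose proof (chord P Q M a b HP HQ HM HPQ) as Hch.
  pose proof (COS_bound a). pose proof (COS_bound b). pose proof (COS_bound (a-b)).
  assert (D12 : 0 < r1 ^ 2 + r2 ^ 2 - 2 * r1 * r2 * cos a).
  { assert (0 <= r1*r2*(1 - cos a)) by (apply Rmult_le_pos; nra). nra. }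
  assert (D13 : 0 < r1 ^ 2 + r3 ^ 2 - 2 * r1 * r3 * cos b).
  { assert (0 <= r1*r3*(1 - cos b)) by (apply Rmult_le_pos; nra). nra. }
  assert (D23 : 0 < r2 ^ 2 + r3 ^ 2 - 2 * r2 * r3 * cos (a-b)).
  { assert (0 <= r2*r3*(1 - cos (a-b))) by (apply Rmult_le_pos; nra). nra. }
  destruct (tangent _ (r1+r2) D12 ltac:(lra)) as [T12 U12].
  destruct (tangent _ (r3-r1) D13 ltac:(lra)) as [T13 U13].
  destruct (tangent _ (r2+r3) D23 ltac:(lra)) as [T23 U23].
  assert (F12 : ((r1+r2)^2 - (r1 ^ 2 + r2 ^ 2 - 2 * r1 * r2 * cos a))/(2*(r1+r2)^3) = P*(1+cos a)).
  { unfold P. field. lra. }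
  assert (F13 : ((r3-r1)^2 - (r1 ^ 2 + r3 ^ 2 - 2 * r1 * r3 * cos b))/(2*(r3-r1)^3) = - (M*(1-cos b))).
  { unfold M. field. lra. }
  assert (F23 : ((r2+r3)^2 - (r2 ^ 2 + r3 ^ 2 - 2 * r2 * r3 * cos (a-b)))/(2*(r2+r3)^3) = Q*(1+cos (a-b))).
  { unfold Q. field. lra. }
  rewrite F12 in T12, U12. rewrite F13 in T13, U13. rewrite F23 in T23, U23.
  unfold Ccost. split. lra.
  intro Hle. split.
  - assert (E : r1 ^ 2 + r2 ^ 2 - 2 * r1 * r2 * cos a = (r1+r2)^2) by (apply U12; lra).
    assert (r1*r2*(1 + cos a) = 0) by nra.
    assert (0 < r1*r2) by nra. nra.
  - assert (E : r1 ^ 2 + r3 ^ 2 - 2 * r1 * r3 * cos b = (r3-r1)^2) by (apply U13; lra).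
    assert (r1*r3*(1 - cos b) = 0) by nra.
    assert (0 < r1*r3) by nra. nra.
Qed.

Lemma cos1_angle (x : R) : cos x = 1 -> angle_eq x 0.
Proof.
  intro H. replace x with (2*(x/2)) in H by field. rewrite cos_2a_sin in H.
  assert (sin (x/2) = 0) by nra.
  destruct (sin_eq_0_0 _ H0) as [k Hk]. exists k.
  replace x with (2*(x/2)) by field. rewrite Hk. ring.
Qed.

Lemma cosm1_angle (x : R) : cos x = -1 -> angle_eq x PI.
Proof.
  intro H. assert (cos (x - PI) = 1).
  { assert (E : cos x = cos ((x - PI) + PI)) by (f_equal; ring).
    rewrite neg_cos in E. lra. }
  destruct (cos1_angle _ H0) as [k Hk]. exists k. lra.
Qed.

Definition phi A B t := / sqrt (A - B*cos t).
Definition dphi A B t := - (B * sin t) / (2 * (A - B*cos t) * sqrt (A - B*cos t)).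
Lemma phi_der A B t: 0 < A - B*cos t -> is_derive (phi A B) t (dphi A B t).
Proof. intros H. unfold phi, dphi.
  assert (HS : 0 < sqrt (A - B*cos t)) by (apply sqrt_lt_R0; lra).
  assert (HSS : sqrt (A - B*cos t) * sqrt (A - B*cos t) = A - B*cos t) by (apply sqrt_sqrt; lra).
  auto_derive; replace (A + - (B * cos t)) with (A - B*cos t) by ring.
  - repeat split; lra.
  - rewrite HSS. field. lra.
Qed.
Lemma dphi_der A B t: 0 < A - B*cos t -> sin t = 0 -> is_derive (dphi A B) t (-(B*cos t)/(2*(A-B*cos t)*sqrt(A-B*cos t))).
Proof. intros H Hs. unfold dphi.
  assert (HS : 0 < sqrt (A - B*cos t)) by (apply sqrt_lt_R0; lra).
  auto_derive; replace (A + - (B * cos t)) with (A - B*cos t) by ring.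
  - repeat split; try lra. apply Rgt_not_eq. apply Rmult_lt_0_compat; lra.
  - rewrite Hs. field. lra.
Qed.

Lemma comp_lin (F : R -> R) dF k c x : is_derive F (c + k*x) dF ->
  is_derive (fun e => F (c + k*e)) x (k * dF).
Proof.
  intro H. assert (Hg : is_derive (fun e => c + k*e) x k) by (auto_derive; [auto| ring]).
  exact (is_derive_comp F (fun e => c + k*e) x dF k H Hg).
Qed.

Lemma plus3 (f g h : R -> R) x a b c : is_derive f x a -> is_derive g x b -> is_derive h x c ->
  is_derive (fun y => f y + g y + h y) x (a+b+c).
Proof.
  intros Ha Hb Hc. exact (is_derive_plus _ _ x _ _ (is_derive_plus _ _ x _ _ Ha Hb) Hc).
Qed.

Lemma second_order (h dh : R -> R) L : (forall x, is_derive h x (dh x)) -> dh 0 = 0 ->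
  is_derive dh 0 L -> L < 0 -> exists e, h e < h 0.
Proof.
  intros Hd H0 HL HLn. apply is_derive_Reals in HL.
  destruct (HL (-L) ltac:(lra)) as [d Hdl].
  pose proof (cond_pos d) as dpos.
  assert (Hneg : forall c, 0 < c < d -> dh c < 0).
  { intros c Hc. assert (c <> 0) by lra. assert (Rabs c < d) by (rewrite Rabs_pos_eq; lra).
    specialize (Hdl c H H1). rewrite Rplus_0_l, H0, Rminus_0_r in Hdl.
    apply Rabs_def2 in Hdl. destruct Hdl as [Hu _].
    assert (dh c / c < 0) by lra.
    destruct (Rlt_or_le (dh c) 0); auto.
    assert (0 <= dh c / c) by (apply Rdiv_le_0_compat; lra). lra. }
  destruct (MVT_cor2 h dh 0 (d/2) ltac:(lra)) as [c [Hc1 Hc2]].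
  { intros c _. apply is_derive_Reals. apply Hd. }
  exists (d/2). assert (dh c < 0) by (apply Hneg; lra).
  assert (dh c * (d/2 - 0) < 0) by nra. lra.
Qed.

Lemma Dpos x y t : 0 < x -> 0 < y -> x <> y -> 0 < x^2 + y^2 - 2*x*y*cos t.
Proof.
  intros. pose proof (COS_bound t).
  assert (0 <= x*y*(1 - cos t)) by (apply Rmult_le_pos; nra).
  assert (0 < (x-y)^2). { assert (x - y <> 0) by lra. replace ((x-y)^2) with ((x-y)*(x-y)) by ring. apply Rsqr_pos_lt; auto. }
  nra.
Qed.

Lemma nec (r1 r2 r3 : R) : 0 < r1 -> r1 < r2 -> r2 < r3 ->
  (forall a b, Ccost r1 r2 r3 PI 0 <= Ccost r1 r2 r3 a b) -> 0 <= poly3 r1 r2 r3.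
Proof.
  intros h1 h12 h23 Hmin.
  destruct (Rle_or_lt 0 (poly3 r1 r2 r3)) as [Hp|Hp]; auto. exfalso.
  pose proof (PQM_id r1 r2 r3 h1 h12 h23) as Hid. cbv zeta in Hid.
  set (P := r1*r2/(r1+r2)^3) in *. set (Q := r2*r3/(r2+r3)^3) in *. set (M := r1*r3/(r3-r1)^3) in *.
  assert (HP : 0 < P) by (unfold P; apply Rdiv_lt_0_compat; [nra| apply pow_lt; lra]).
  assert (HQ : 0 < Q) by (unfold Q; apply Rdiv_lt_0_compat; [nra| apply pow_lt; lra]).
  assert (HM : 0 < M) by (unfold M; apply Rdiv_lt_0_compat; [nra| apply pow_lt; lra]).
  assert (HPQ : P*Q < M*(P+Q)).
  { assert (0 < - poly3 r1 r2 r3 * (r1*r2*r3) / ((r1+r2)^3*(r2+r3)^3*(r3-r1)^3)).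
    { apply Rdiv_lt_0_compat. apply Rmult_lt_0_compat. lra.
      repeat apply Rmult_lt_0_compat; lra.
      apply Rmult_lt_0_compat; [apply Rmult_lt_0_compat|]; apply pow_lt; lra. }
    lra. }
  set (k := Q/(P+Q)).
  set (h := fun e => phi (r1^2+r2^2) (2*r1*r2) (PI + k*e) + phi (r1^2+r3^2) (2*r1*r3) (0 + 1*e)
                   + phi (r2^2+r3^2) (2*r2*r3) (PI + (k-1)*e)).
  set (dh := fun e => k * dphi (r1^2+r2^2) (2*r1*r2) (PI + k*e) + 1 * dphi (r1^2+r3^2) (2*r1*r3) (0 + 1*e)
                   + (k-1) * dphi (r2^2+r3^2) (2*r2*r3) (PI + (k-1)*e)).
  assert (Hh : forall e, Ccost r1 r2 r3 (PI + k*e) e = h e).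
  { intro e. unfold Ccost, h, phi. replace (PI + k*e - e) with (PI+(k-1)*e) by ring.
    replace (0+1*e) with e by ring. reflexivity. }
  assert (Hd : forall x, is_derive h x (dh x)).
  { intro x. unfold h, dh. apply plus3; apply comp_lin; apply phi_der; apply Dpos; lra. }
  assert (H0 : dh 0 = 0).
  { unfold dh, dphi. rewrite !Rmult_0_r, !Rplus_0_r, sin_PI, sin_0. unfold Rdiv. ring. }
  set (X12 := -((2*r1*r2)*cos PI)/(2*((r1^2+r2^2)-(2*r1*r2)*cos PI)*sqrt((r1^2+r2^2)-(2*r1*r2)*cos PI))).
  set (X13 := -((2*r1*r3)*cos 0)/(2*((r1^2+r3^2)-(2*r1*r3)*cos 0)*sqrt((r1^2+r3^2)-(2*r1*r3)*cos 0))).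
  set (X23 := -((2*r2*r3)*cos PI)/(2*((r2^2+r3^2)-(2*r2*r3)*cos PI)*sqrt((r2^2+r3^2)-(2*r2*r3)*cos PI))).
  assert (HL : is_derive dh 0 (k*(k*X12) + 1*(1*X13) + (k-1)*((k-1)*X23))).
  { unfold dh. apply plus3; apply is_derive_scal; apply comp_lin.
    - replace (PI + k*0) with PI by ring. apply dphi_der. apply Dpos; lra. apply sin_PI.
    - replace (0 + 1*0) with 0 by ring. apply dphi_der. apply Dpos; lra. apply sin_0.
    - replace (PI + (k-1)*0) with PI by ring. apply dphi_der. apply Dpos; lra. apply sin_PI. }
  assert (E12 : X12 = P).
  { unfold X12, P. rewrite cos_PI.
    replace (r1 ^ 2 + r2 ^ 2 - 2 * r1 * r2 * -1) with ((r1+r2)^2) by ring.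
    rewrite sqrt_pow2 by lra. field. lra. }
  assert (E13 : X13 = -M).
  { unfold X13, M. rewrite cos_0.
    replace (r1 ^ 2 + r3 ^ 2 - 2 * r1 * r3 * 1) with ((r3-r1)^2) by ring.
    rewrite sqrt_pow2 by lra. field. lra. }
  assert (E23 : X23 = Q).
  { unfold X23, Q. rewrite cos_PI.
    replace (r2 ^ 2 + r3 ^ 2 - 2 * r2 * r3 * -1) with ((r2+r3)^2) by ring.
    rewrite sqrt_pow2 by lra. field. lra. }
  rewrite E12, E13, E23 in HL.
  assert (HLn : k*(k*P) + 1*(1*(-M)) + (k-1)*((k-1)*Q) < 0).
  { assert (Eq : (k*(k*P) + 1*(1*(-M)) + (k-1)*((k-1)*Q)) * (P+Q) = P*Q - M*(P+Q)).
    { unfold k. field. lra. }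
    destruct (Rlt_or_le (k*(k*P) + 1*(1*(-M)) + (k-1)*((k-1)*Q)) 0); auto.
    assert (0 <= (k*(k*P) + 1*(1*(-M)) + (k-1)*((k-1)*Q)) * (P+Q)) by (apply Rmult_le_pos; lra).
    lra. }
  destruct (second_order h dh _ Hd H0 HL HLn) as [e He].
  specialize (Hmin (PI + k*e) e). rewrite Hh in Hmin.
  assert (h 0 = Ccost r1 r2 r3 PI 0).
  { rewrite <- Hh. f_equal. ring. }
  lra.
Qed.

Theorem theorem1p3 (r1 r2 r3 : R) (h1 : 0 < r1) (h12 : r1 < r2) (h23 : r2 < r3) :
  Ccost r1 r2 r3 PI 0 = / (r1 + r2) + / (r2 + r3) + / (r3 - r1) /\
  ((forall a b : R, Ccost r1 r2 r3 PI 0 <= Ccost r1 r2 r3 a b) <->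
     0 <= r2 * (r3 - r1) ^ 3 - r1 * (r3 + r2) ^ 3 - r3 * (r1 + r2) ^ 3) /\
  (0 <= r2 * (r3 - r1) ^ 3 - r1 * (r3 + r2) ^ 3 - r3 * (r1 + r2) ^ 3 ->
     forall a b : R, Ccost r1 r2 r3 a b <= Ccost r1 r2 r3 PI 0 ->
       angle_eq a PI /\ angle_eq b 0).
Proof.
  split; [apply f0_val; assumption|]. split.
  - split.
    + intro H. exact (nec r1 r2 r3 h1 h12 h23 H).
    + intros Hp a b. exact (proj1 (suff r1 r2 r3 h1 h12 h23 Hp a b)).
  - intros Hp a b Hle. destruct (proj2 (suff r1 r2 r3 h1 h12 h23 Hp a b) Hle) as [Ha Hb].
    split; [apply cosm1_angle | apply cos1_angle]; assumption.
Qed.
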